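(* Let $f,g\in\mathbb{Q}[x]$ with $f\neq0$, let $d=\gcd(f,g)$, and assume $\gcd(f/d,d)=1$ and that $g(\xi)\ge0$ at every real root $\xi$ of $f$. Then there exists $b\in\mathbb{Q}[x]$ such that $b$ is relatively prime to $f/d$, $b(\xi)>0$ at every real root $\xi$ of $f/d$, and $b\,d^2\equiv g\pmod f$. *)

(* Defs.v *)
From HB Require Import structures.
From Stdlib Require Import Reals.
From mathcomp Require Import all_boot all_order all_algebra.
From mathcomp Require Import Rstruct.
Set Implicit Arguments. Unset Strict Implicit. Unset Printing Implicit Defensive.
Import Order.TTheory GRing.Theory Num.Theory.
Local Open Scope ring_scope.

Definition realpoly (p : {poly rat}) : {poly R} := map_poly (ratr : rat -> R) p.

Definition real_root (p : {poly rat}) (xi : R) : bool := root (realpoly p) xi.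

(* Main.v *)
Require Import Defs.
From Stdlib Require Import Reals.
From mathcomp Require Import all_boot all_order all_algebra.
From mathcomp Require Import Rstruct.
From mathcomp Require Import ring.
Import Order.TTheory GRing.Theory Num.Theory.
Local Open Scope ring_scope.

Lemma evM (p q : {poly rat}) (x : R) :
  (realpoly (p * q)).[x] = (realpoly p).[x] * (realpoly q).[x].
Proof. by rewrite /realpoly rmorphM /= hornerM. Qed.

Lemma evD (p q : {poly rat}) (x : R) :
  (realpoly (p + q)).[x] = (realpoly p).[x] + (realpoly q).[x].
Proof. by rewrite /realpoly rmorphD /= hornerD. Qed.

Lemma ev1 (x : R) : (realpoly 1).[x] = 1.
Proof. by rewrite /realpoly rmorph1 hornerC. Qed.

Lemma root_ev (p : {poly rat}) (x : R) : real_root p x -> (realpoly p).[x] = 0.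
Proof. by move/rootP. Qed.

Lemma bez_ev (p q u v : {poly rat}) (x : R) :
  u * p + v * q = 1 -> real_root q x -> (realpoly u).[x] * (realpoly p).[x] = 1.
Proof.
move=> E /root_ev Hq.
have := congr1 (fun r => (realpoly r).[x]) E => /=.
by rewrite evD !evM Hq mulr0 addr0 ev1.
Qed.

Lemma alg_id (K : comRingType) (f g h d g1 u1 u2 : K) :
  f = h * d -> g = g1 * d -> u1 * d + u2 * h = 1 ->
  g1 * u1 * d ^+ 2 - g = - (g1 * u2) * f.
Proof.
move=> -> -> Eu.
have E1 : u1 * d = 1 - u2 * h by rewrite -Eu addrK.
transitivity (g1 * d * (u1 * d) - g1 * d); first by ring.
rewrite E1; ring.
Qed.

Theorem mainTheorem9 (f g : {poly rat}) :
  f != 0 ->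
  coprimep (f %/ gcdp f g) (gcdp f g) ->
  (forall xi : R, real_root f xi -> 0 <= (realpoly g).[xi]) ->
  exists b : {poly rat},
    [/\ coprimep b (f %/ gcdp f g),
        (forall xi : R, real_root (f %/ gcdp f g) xi -> 0 < (realpoly b).[xi])
      & f %| b * (gcdp f g) ^+ 2 - g].
Proof.
move=> f0 cop pos.
set d := gcdp f g in cop *; set h := f %/ d in cop *.
set g1 := g %/ d.
have Ef : f = h * d by rewrite /h divpK // dvdp_gcdl.
have Eg : g = g1 * d by rewrite /g1 divpK // dvdp_gcdr.
have cg : coprimep h g1 by apply: coprimep_div_gcd; rewrite f0.
have [[u1 u2] /= Eu] : exists u : {poly rat} * {poly rat}, u.1 * d + u.2 * h = 1.
  by apply/Bezout_eq1_coprimepP; rewrite coprimep_sym.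
have cb : coprimep (g1 * u1) h.
  rewrite coprimepMl coprimep_sym cg /=.
  by apply/Bezout_eq1_coprimepP; exists (d, u2); rewrite /= mulrC.
exists (g1 * u1); split => //.
- move=> xi hxi.
  have HU := @bez_ev _ _ _ _ xi Eu hxi.
  have [[v1 v2] /= Ev] : exists v : {poly rat} * {poly rat}, v.1 * (g1 * u1) + v.2 * h = 1.
    by apply/Bezout_eq1_coprimepP.
  have HV := @bez_ev _ _ _ _ xi Ev hxi.
  have Hf : real_root f xi by rewrite /real_root Ef /realpoly rmorphM /= rootM; apply/orP; left; exact: hxi.
  have Hg := pos xi Hf; rewrite Eg evM in Hg.
  rewrite lt0r; apply/andP; split.
    apply/eqP => B0; move: HV; rewrite B0 mulr0 => /eqP; by rewrite eq_sym oner_eq0.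
  have -> : (realpoly (g1 * u1)).[xi] =
     ((realpoly g1).[xi] * (realpoly d).[xi]) * ((realpoly u1).[xi] ^+ 2).
    rewrite evM; move: HU.
    set a := (realpoly g1).[xi]; set b := (realpoly d).[xi]; set c := (realpoly u1).[xi].
    move=> HU.
    have -> : a * c = a * c * (c * b) by rewrite HU mulr1.
    rewrite expr2 -!mulrA; congr (a * _); by rewrite [RHS]mulrC mulrA.
  by apply: mulr_ge0 => //; apply: sqr_ge0.
- apply/dvdpP; exists (- (g1 * u2)).
  exact: (@alg_id _ f g h d g1 u1 u2 Ef Eg Eu).
Qed.
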